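(* Let $k\ge 2$ and let $n_1,\dots,n_k\ge 3$ be integers. For $G=P_{n_1}\Box P_{n_2}\Box\cdots\Box P_{n_k}$, $$rx_3(G)=\sum_{i=1}^k n_i-k.$$
   Context: $P_n$ denotes the path on $n$ vertices. An edge coloring may give adjacent edges the same color; a tree is rainbow if its edges have pairwise distinct colors. For a connected graph $G$ on at least $3$ vertices, $rx_3(G)$ is the minimum number of colors in an edge coloring such that every set of $3$ vertices lies in some rainbow tree. The Cartesian product $G\Box H$ has vertex set $V(G)\times V(H)$, with $(g_1,h_1)\sim(g_2,h_2)$ iff ($g_1=g_2$ and $h_1h_2\in E(H)$) or ($h_1=h_2$ and $g_1g_2\in E(G)$). *)

(* Defs.v *)
From HB Require Import structures.
From mathcomp Require Import all_boot.
Set Implicit Arguments. Unset Strict Implicit. Unset Printing Implicit Defensive.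

(* A simple graph is a symmetric irreflexive relation e on a finite type T.
   Edges are represented as 2-element vertex sets [set u; v] with e u v. *)
Section Graphs.
Variables (T : finType) (e : rel T).

Definition is_edge (E : {set T}) : bool :=
  [exists u, exists v, e u v && (E == [set u; v])].

Definition span_vertices (F : {set {set T}}) : {set T} := \bigcup_(E in F) E.

Definition is_tree (F : {set {set T}}) : bool :=
  [forall E in F, is_edge E] &&
  [forall x in span_vertices F, forall y in span_vertices F,
     connect (fun a b => [set a; b] \in F) x y] &&
  (#|F| == #|span_vertices F| - 1).

(* an edge colouring with (at most) m colours: colour of edge {u,v} is c [set u; v] *)
Definition rainbow (m : nat) (c : {set T} -> 'I_m) (F : {set {set T}}) : bool :=
  [forall E in F, forall E' in F, (c E == c E') ==> (E == E')].

Definition three_rainbow_coloring (m : nat) (c : {set T} -> 'I_m) : Prop :=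
  forall S : {set T}, #|S| = 3 ->
    exists F : {set {set T}}, [/\ is_tree F, rainbow c F & S \subset span_vertices F].

Definition rx3_eq (r : nat) : Prop :=
  (exists c : {set T} -> 'I_r, three_rainbow_coloring c) /\
  (forall m (c : {set T} -> 'I_m), three_rainbow_coloring c -> r <= m).
End Graphs.

(* P_{n_0} □ ... □ P_{n_(k-1)}: vertices are tuples (x_i) with x_i < n_i;
   adjacent iff they differ by 1 in exactly one coordinate and agree elsewhere. *)
Definition grid_vertex (k : nat) (n : 'I_k -> nat) : finType :=
  {dffun forall i : 'I_k, 'I_(n i)}.

Definition grid_adj (k : nat) (n : 'I_k -> nat) : rel (grid_vertex n) :=
  fun u v => [exists i : 'I_k,
     (((u i : nat).+1 == v i) || ((v i : nat).+1 == u i)) &&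
     [forall j : 'I_k, (j != i) ==> (u j == v j)]].

(* Main.v *)
Require Import Defs.
From mathcomp Require Import all_boot zify.
Set Implicit Arguments. Unset Strict Implicit. Unset Printing Implicit Defensive.

Section ParentTree.
Variables (T : finType) (e : rel T) (p : T -> T) (r : T) (h : T -> nat).
Hypothesis Hp : forall v, v != r -> e v (p v) && (h (p v) < h v).

Lemma hp_lt v : v != r -> h (p v) < h v.
Proof. by move/Hp/andP=> []. Qed.

Lemma reach_root s : fconnect p s r.
Proof.
move: {2}(h s) (leqnn (h s)) => N; elim: N s => [|N IH] s hs.
  case: (eqVneq s r) => [->|/hp_lt]; first exact: connect0. lia.
case: (eqVneq s r) => [->|nr]; first exact: connect0.
apply: connect_trans (fconnect1 p s) (IH _ _).
have := hp_lt nr; lia.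
Qed.

Variable S : {set T}.
Definition V0 := [set v | [exists s in S, fconnect p s v]].
Definition Ftree := [set [set v; p v] | v in V0 :\ r].

Lemma V0p v : v \in V0 -> p v \in V0.
Proof.
rewrite !inE => /existsP[s /andP[sS c]]; apply/existsP; exists s.
by rewrite sS (connect_trans c (fconnect1 p v)).
Qed.

Lemma S_V0 : S \subset V0.
Proof. by apply/subsetP=> s sS; rewrite inE; apply/existsP; exists s; rewrite sS connect0. Qed.

Lemma edge_F v : v \in V0 -> v != r -> [set v; p v] \in Ftree.
Proof. by move=> vV vr; apply/imsetP; exists v; rewrite // in_setD1 vr. Qed.

Lemma r_span t : t \in V0 -> t != r -> r \in span_vertices Ftree.
Proof.
move=> tV tr; move: {2}(h t) (leqnn (h t)) => N; elim: N t tV tr => [|N IH] t tV tr ht.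
  have := hp_lt tr; lia.
case: (eqVneq (p t) r) => [ps|psr].
  apply/bigcupP; exists [set t; p t]; first exact: edge_F.
  by rewrite ps set22.
apply: (IH (p t)) => //; first exact: V0p.
have := hp_lt tr; lia.
Qed.

Hypothesis Snr : exists2 s, s \in S & s != r.

Lemma r_V0 : r \in V0.
Proof. case: Snr => s sS _; rewrite inE; apply/existsP; exists s; by rewrite sS reach_root. Qed.

Lemma span_Ftree : span_vertices Ftree = V0.
Proof.
apply/setP=> x; apply/bigcupP/idP.
  case=> E /imsetP[v]; rewrite in_setD1 => /andP[vr vV] -> {E}; rewrite in_set2.
  case/orP=> /eqP->; first by [].
  exact: V0p.
move=> xV.
case: (eqVneq x r) => [->|xr]; last by exists [set x; p x]; rewrite ?set21 //; apply: edge_F.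
case: Snr => s sS snr.
by apply/bigcupP; apply: (r_span (t:=s)) => //; rewrite (subsetP S_V0).
Qed.

Definition FR := fun a b => [set a; b] \in Ftree.

Lemma FR_sym : symmetric FR.
Proof. by move=> a b; rewrite /FR setUC. Qed.

Lemma conn_r x : x \in V0 -> connect FR x r.
Proof.
move=> xV; move: {2}(h x) (leqnn (h x)) => N; elim: N x xV => [|N IH] x xV hx.
  case: (eqVneq x r) => [->|/hp_lt]; first exact: connect0. lia.
case: (eqVneq x r) => [->|xr]; first exact: connect0.
apply: (connect_trans (y := p x)); first by apply: connect1; exact: edge_F.
apply: IH; first exact: V0p.
have := hp_lt xr; lia.
Qed.

Lemma card_Ftree : #|Ftree| = #|V0| - 1.
Proof.
rewrite /Ftree card_in_imset.
  by rewrite (cardsD1 r V0) r_V0; lia.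
move=> v w; rewrite !in_setD1 => /andP[vr _] /andP[wr _] E.
have : v \in [set w; p w] by rewrite -E set21.
have : w \in [set v; p v] by rewrite E set21.
rewrite !inE => /orP[/eqP->//|/eqP wv] /orP[/eqP//|/eqP vw].
have := hp_lt vr; have := hp_lt wr; rewrite -wv -vw; lia.
Qed.

Lemma Ftree_tree : (forall v, v != r -> e v (p v)) -> is_tree e Ftree.
Proof.
move=> He; apply/andP; split; first (apply/andP; split).
- apply/forall_inP=> E /imsetP[v]; rewrite in_setD1 => /andP[vr _] ->.
  apply/existsP; exists v; apply/existsP; exists (p v); by rewrite He // eqxx.
- rewrite span_Ftree; apply/forall_inP=> x xV; apply/forall_inP=> y yV.
  apply: connect_trans (conn_r xV) _.
  by rewrite (sym_connect_sym FR_sym); apply: conn_r.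
- by rewrite card_Ftree span_Ftree.
Qed.

End ParentTree.
Section Grid.
Variables (k : nat) (n : 'I_k -> nat).
Notation V := (grid_vertex n).

Definition step N (x y : 'I_N) : 'I_N := insubd x (if x < y then x.+1 else x.-1).

Lemma val_step N (x y : 'I_N) : x != y ->
  val (step x y) = if x < y then x.+1 else x.-1.
Proof.
move=> xy; rewrite /step val_insubd.
have := ltn_ord x; have := ltn_ord y; move: xy; rewrite -val_eqE /=.
by case: (ltnP x y) => h1 nxy hy hx; case: ifP => //; lia.
Qed.

Variable m : V.

Definition fstd (v : V) (j : 'I_k) :=
  (v j != m j) && [forall j' : 'I_k, (j' < j) ==> (v j' == m j')].

Definition par (v : V) : V :=
  [ffun j => if fstd v j then step (v j) (m j) else v j].

Lemma parE v j : par v j = if fstd v j then step (v j) (m j) else v j.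
Proof. by rewrite ffunE. Qed.


Lemma fstd_uniq v i j : fstd v i -> fstd v j -> i = j.
Proof.
move=> /andP[vi /forallP Hi] /andP[vj /forallP Hj]; apply: val_inj => /=.
case: (ltngtP i j) => // h.
  by have := Hj i; rewrite h (negbTE vi).
by have := Hi j; rewrite h (negbTE vj).
Qed.

Lemma fstd_ex v : v != m -> exists i, fstd v i.
Proof.
move=> vm.
have [j0 vj0] : exists j, v j != m j.
  apply/existsP; apply: contra vm => /forallP H; apply/eqP/ffunP=> j; apply/eqP.
  by have := H j; rewrite ?negbK.
case: (@arg_minnP _ j0 (fun j => v j != m j) (fun j : 'I_k => val j) vj0) => i vi Hi.
exists i; rewrite /fstd vi; apply/forallP=> j; apply/implyP=> ji.
apply: contraLR ji => vj; rewrite -leqNgt; exact: Hi.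
Qed.

Lemma par_other v j : ~~ fstd v j -> par v j = v j.
Proof. by move=> h; rewrite parE (negbTE h). Qed.

Lemma par_m : par m = m.
Proof. by apply/ffunP=> j; rewrite par_other // /fstd eqxx. Qed.

Lemma par_fst v i : fstd v i ->
  nat_of_ord (par v i) = if v i < m i then (v i).+1 else (v i).-1.
Proof. by move=> h; rewrite parE h val_step //; case/andP: h. Qed.

Definition dist (v : V) := \sum_(j < k) ((v j - m j) + (m j - v j)).

Lemma par_adj v : v != m -> grid_adj v (par v).
Proof.
case/fstd_ex=> i fi; apply/existsP; exists i; apply/andP; split.
  have := par_fst fi; case/andP: fi; rewrite -val_eqE /= => ne _.
  case: ltnP => h ->; apply/orP; [left|right]; apply/eqP; lia.
apply/forallP=> j; apply/implyP=> ji; rewrite par_other //.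
by apply: contra ji => fj; rewrite (fstd_uniq fj fi).
Qed.

Lemma par_dist v : v != m -> dist (par v) < dist v.
Proof.
case/fstd_ex=> i fi; rewrite /dist (bigD1 i) //= [X in _ < X](bigD1 i) //=.
rewrite (eq_bigr (fun j => (v j - m j) + (m j - v j))); last first.
  move=> j ji; rewrite par_other //.
  by apply: contra ji => fj; rewrite (fstd_uniq fj fi).
have := par_fst fi; case/andP: fi; rewrite -val_eqE /= => ne _.
case: ltnP => h ->; lia.
Qed.

Definition Inv (s v : V) :=
  (forall j, (m j <= v j <= s j) || (s j <= v j <= m j)) /\
  (forall j j' : 'I_k, j < j' -> v j != m j -> v j' = s j').

Lemma inv_start s : Inv s s.
Proof. split=> [j|j j' _ _ //]; lia. Qed.

Lemma inv_par s v : Inv s v -> Inv s (par v).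
Proof.
case: (eqVneq v m) => [->|vm]; first by rewrite par_m.
case/fstd_ex: (vm) => i fi [H1 H2]; split.
  move=> j; case: (eqVneq j i) => [->|ji].
    have := H1 i; have := par_fst fi; case/andP: fi; rewrite -val_eqE /= => ne _.
    case: ltnP => h ->; lia.
  rewrite par_other; last by apply: contra ji => fj; rewrite (fstd_uniq fj fi).
  exact: H1.
move=> j j' jj' pj.
have nj' : j' != i.
  apply/eqP=> ei; subst j'.
  case/andP: (fi) => _ /forallP/(_ j); rewrite jj' /= => /eqP vj.
  by move: pj; rewrite par_other ?vj ?eqxx //; apply/negP=> fj; rewrite (fstd_uniq fj fi) ltnn in jj'.
rewrite par_other; last by apply: contra nj' => fj; rewrite (fstd_uniq fj fi).
case: (eqVneq j i) => [ji|ji].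
  by subst j; apply: (H2 i j' jj'); case/andP: fi.
apply: H2 jj' _; move: pj; rewrite par_other //.
by apply: contra ji => fj; rewrite (fstd_uniq fj fi).
Qed.

Lemma inv_reach s v : fconnect par s v -> Inv s v.
Proof.
move/iter_findex=> <-; elim: (findex _ _ _) => [|t IH] /=; first exact: inv_start.
exact: inv_par.
Qed.

End Grid.

Section Core.
Variables (k : nat) (n : 'I_k -> nat) (m : grid_vertex n) (S : {set grid_vertex n}).
Hypothesis MedL : forall i (s s' : grid_vertex n), s \in S -> s' \in S ->
  s i < m i -> s' i < m i -> s = s'.
Hypothesis MedG : forall i (s s' : grid_vertex n), s \in S -> s' \in S ->
  m i < s i -> m i < s' i -> s = s'.

Lemma core u u' i : u \in V0 (par m) S -> u' \in V0 (par m) S ->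
  fstd m u i -> fstd m u' i ->
  minn (par m u i) (u i) = minn (par m u' i) (u' i) -> u = u'.
Proof.
rewrite !inE => /exists_inP[s sS /inv_reach [I1 I2]] /exists_inP[s' sS' /inv_reach [I1' I2']] fi fi'.
rewrite (par_fst fi) (par_fst fi') => hmin.
have ne := fi; have ne' := fi'; case/andP: ne; case/andP: ne'.
move=> ne1 Hf' ne2 Hf.
have ne : (u i : nat) != m i by rewrite val_eqE.
have ne' : (u' i : nat) != m i by rewrite val_eqE.
have := I1 i; have := I1' i => J' J.
have eqa : (u i : nat) = u' i.
  move: hmin; do 2 case: ltnP => ? ; lia.
have ss : s = s'.
  case: (ltnP (u i) (m i)) => h.
    apply: (MedL (i:=i)) => //; lia.
  apply: (MedG (i:=i)) => //; lia.
subst s'.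
apply/ffunP=> j; apply: val_inj => /=.
case: (ltngtP j i) => hj.
- move/forallP: Hf => /(_ j); move/forallP: Hf' => /(_ j); rewrite hj /= => /eqP-> /eqP-> //.
- rewrite (I2 i j hj) ?(I2' i j hj) //; by rewrite -val_eqE.
- by have -> : j = i by apply: val_inj.
Qed.
End Core.

Definition med N (x y z : 'I_N) : 'I_N :=
  if (y <= x <= z) || (z <= x <= y) then x
  else if (x <= y <= z) || (z <= y <= x) then y else z.

Lemma medP N (x y z : 'I_N) :
  ((x < med x y z) + (y < med x y z) + (z < med x y z) <= 1) &&
  ((med x y z < x) + (med x y z < y) + (med x y z < z) <= 1).
Proof. rewrite /med; case: ifP => h1; [|case: ifP => h2]; apply/andP; split; lia. Qed.

Section Upper.
Variables (k : nat) (n : 'I_k -> nat).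
Notation V := (grid_vertex n).

Definition P (E : {set V}) (x : {i : 'I_k & 'I_((n i).-1)}) :=
  [exists v : V, exists w : V, (E == [set v; w]) &&
     ((v (tag x)).+1 == w (tag x)) && (val (tagged x) == v (tag x))].

Lemma keyinfo (m u v w : V) j : u != m -> [set u; par m u] = [set v; w] ->
  (v j).+1 = w j -> fstd m u j /\ (v j : nat) = minn (par m u j) (u j).
Proof.
move=> um E vw.
have vE : v \in [set u; par m u] by rewrite E set21.
have wE : w \in [set u; par m u] by rewrite E set22.
have fj : fstd m u j.
  apply/negPn/negP => nf; move: (par_other nf) vE wE vw; rewrite !inE.
  move=> pe; case/orP=> /eqP-> /orP[]/eqP->; rewrite ?pe; lia.
split=> //; move: vE wE vw; rewrite !inE.
by case/orP=> /eqP-> /orP[]/eqP-> ; lia.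
Qed.


Hypothesis hk : 2 <= k.
Hypothesis hn : forall i, 3 <= n i.

Notation K := {i : 'I_k & 'I_((n i).-1)}.

Lemma sum_pred : \sum_(i < k) (n i).-1 = \sum_(i < k) n i - k.
Proof.
have -> : \sum_(i < k) n i = \sum_(i < k) ((n i).-1 + 1).
  by apply: eq_bigr => i _; have := hn i; lia.
by rewrite big_split /= sum1_card card_ord addnK.
Qed.

Lemma cardK : #|{: K}| = \sum_(i < k) n i - k.
Proof.
rewrite card_tagged -sum_pred sumnE big_map big_enum /=.
by apply: eq_bigr => i _; rewrite card_ord.
Qed.

Lemma k0 : 0 < k. Proof. lia. Qed.
Definition i0 : 'I_k := Ordinal k0.
Lemma l0 : 0 < (n i0).-1. Proof. have := hn i0; lia. Qed.
Definition x0 : K := Tagged (fun i => 'I_((n i).-1)) (Ordinal l0).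

Definition cK (E : {set V}) : K := odflt x0 [pick x | P E x].
Definition col (E : {set V}) : 'I_(\sum_(i < k) n i - k) := cast_ord cardK (enum_rank (cK E)).

Lemma keyOf (m u : V) : u != m ->
  fstd m u (tag (cK [set u; par m u])) /\
  (val (tagged (cK [set u; par m u])) = minn (par m u (tag (cK [set u; par m u]))) (u (tag (cK [set u; par m u])))).
Proof.
move=> um; rewrite /cK; case: pickP => [x /existsP[v /existsP[w /andP[/andP[/eqP E vw] /eqP tx]]]|none] /=.
  have [f mn] := keyinfo (j := tag x) um E (eqP vw).
  by split=> //; rewrite tx.
exfalso; case: (fstd_ex um) => i fi.
have pf := par_fst fi.
have hlt : minn (par m u i) (u i) < (n i).-1.
  have := ltn_ord (u i); have := ltn_ord (m i); case/andP: (fi) => ne _.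
  have ne' : (u i : nat) != m i by rewrite val_eqE.
  rewrite pf; case: (ltnP (u i) (m i)) => ? ; lia.
have := none (Tagged (fun i => 'I_((n i).-1)) (Ordinal hlt)).
rewrite /= /P => /negbT/negP; apply; apply/existsP.
case: (ltnP (u i) (m i)) => h.
  exists u; apply/existsP; exists (par m u); rewrite eqxx /= pf h /=.
  by apply/andP; split; apply/eqP; lia.
exists (par m u); apply/existsP; exists u; rewrite setUC eqxx /= pf ltnNge h /=.
have ne' : (u i : nat) != m i by rewrite val_eqE; case/andP: fi.
have H : forall a b : nat, a != b -> b <= a -> a.-1.+1 = a by move=> *; lia.
by apply/andP; split; apply/eqP; try lia; apply: H ne' h.
Qed.


Lemma upper : exists c : {set V} -> 'I_(\sum_(i < k) n i - k),
  three_rainbow_coloring (@grid_adj k n) c.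
Proof.
exists col => S S3.
have [a [b [c [[aS bS cS] [ab bc ca]]]]] : exists a b c,
  [/\ a \in S, b \in S & c \in S] /\ [/\ a != b, b != c & c != a].
  by apply/card_gt2P; rewrite S3.
have SE : S = [set a; b; c].
  apply/eqP; rewrite eq_sym eqEcard; apply/andP; split.
    by apply/subsetP=> x; rewrite !inE => /orP[/orP[]|]/eqP->.
  by rewrite S3 setUC cardsU1 cards2 !inE ab (negbTE ca) eq_sym (negbTE bc).
pose m : V := [ffun i => med (a i) (b i) (c i)].
have MedL : forall i (s s' : V), s \in S -> s' \in S ->
  s i < m i -> s' i < m i -> s = s'.
  move=> i s s'; rewrite SE !inE ffunE => /orP[/orP[]|]/eqP-> /orP[/orP[]|]/eqP-> // h1 h2;
  exfalso; have := medP (a i) (b i) (c i); lia.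
have MedG : forall i (s s' : V), s \in S -> s' \in S ->
  m i < s i -> m i < s' i -> s = s'.
  move=> i s s'; rewrite SE !inE ffunE => /orP[/orP[]|]/eqP-> /orP[/orP[]|]/eqP-> // h1 h2;
  exfalso; have := medP (a i) (b i) (c i); lia.
have Snr : exists2 s, s \in S & s != m.
  case: (eqVneq a m) => [am|am]; last by exists a.
  by exists b => //; rewrite -am eq_sym.
have Hp : forall v, v != m -> grid_adj v (par m v) && (dist m (par m v) < dist m v).
  by move=> v vm; rewrite par_adj // par_dist.
exists (Ftree (par m) m S); split.
- apply: (@Ftree_tree _ _ (par m) m (dist m) Hp S Snr).
  exact: par_adj.
- apply/forall_inP => E /imsetP[u uV ->]; apply/forall_inP => E' /imsetP[u' uV' ->].
  apply/implyP => /eqP /cast_ord_inj /enum_rank_inj ce.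
  move: uV uV'; rewrite !in_setD1 => /andP[um uV0] /andP[um' uV0'].
  have [f1 e1] := keyOf um; have [f2 e2] := keyOf um'.
  rewrite ce in f1 e1.
  have uu : u = u' by apply: (core MedL MedG uV0 uV0' f1 f2); rewrite -e1 -e2.
  by rewrite uu.
- by rewrite (span_Ftree Hp Snr); exact: S_V0.
Qed.

End Upper.

Section Cross.
Variables (T : finType) (R : rel T) (f : T -> nat).
Hypothesis HR : forall a b, R a b -> (f b = (f a).+1) \/ (f a = (f b).+1).

Lemma cross x y t : connect R x y -> f x <= t < f y ->
  exists a b, [/\ R a b, f a = t & f b = t.+1].
Proof.
move/connectP=> [p pth ->] {y}; elim: p x pth => [|z p IH] x /=.
  move=> _; lia.
case/andP=> xz pz ht.
case: (leqP (f z) t) => hz.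
  apply: IH => //; lia.
exists x, z; split => //; have := HR xz; lia.
Qed.
End Cross.

Section Lower.
Variables (k : nat) (n : 'I_k -> nat).
Notation V := (grid_vertex n).
Hypothesis hk : 2 <= k.
Hypothesis hn : forall i, 3 <= n i.

Definition fsum (v : V) := \sum_(i < k) (v i : nat).

Lemma adj_f u v : grid_adj u v -> (fsum v = (fsum u).+1) \/ (fsum u = (fsum v).+1).
Proof.
case/existsP=> i /andP[h /forallP H].
have E : forall j, j != i -> (u j : nat) = v j by move=> j ji; have := H j; rewrite ji => /eqP->.
rewrite /fsum (bigD1 i) //= [\sum_(j < k) (u j : nat)](bigD1 i) //=.
rewrite (eq_bigr (fun j => (u j : nat))); last by move=> j ji; rewrite E.
have H' : forall a b s : nat, (a.+1 == b) || (b.+1 == a) ->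
  b + s = (a + s).+1 \/ a + s = (b + s).+1 by move=> *; lia.
exact: (H' _ _ _ h).
Qed.

Lemma adj_irr (u : V) : ~~ grid_adj u u.
Proof. apply/existsP=> [[i /andP[/orP[] h _]]]; move: h => /eqP; lia. Qed.


Lemma lower m (c : {set V} -> 'I_m) :
  three_rainbow_coloring (@grid_adj k n) c -> \sum_(i < k) n i - k <= m.
Proof.
move=> H.
have k0 : 0 < k by lia.
pose i0 : 'I_k := Ordinal k0.
have hpos i : 0 < n i by have := hn i; lia.
have htop i : (n i).-1 < n i by have := hn i; lia.
have h1 i : 1 < n i by have := hn i; lia.
pose z : V := [ffun i => Ordinal (hpos i)].
pose t : V := [ffun i => Ordinal (htop i)].
pose w : V := [ffun i => if i == i0 then Ordinal (h1 i) else Ordinal (hpos i)].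
have zt : z != t.
  apply/eqP => /ffunP/(_ i0); rewrite !ffunE => /(congr1 val) /=; have := hn i0; lia.
have tw : t != w.
  apply/eqP => /ffunP/(_ i0); rewrite !ffunE eqxx => /(congr1 val) /=; have := hn i0; lia.
have wz : w != z.
  apply/eqP => /ffunP/(_ i0); rewrite !ffunE eqxx => /(congr1 val) /=; lia.
have S3 : #|[set z; t; w]| = 3.
  by rewrite setUC cardsU1 cards2 !inE zt (negbTE wz) eq_sym (negbTE tw).
have [F [/andP[/andP[FA FB] FC] rainF subS]] := H _ S3.
pose R := fun a b => [set a; b] \in F.
have HR : forall a b, R a b -> (fsum b = (fsum a).+1) \/ (fsum a = (fsum b).+1).
  move=> a b Rab; move/forall_inP: FA => /(_ _ Rab) /existsP[u /existsP[v /andP[uv /eqP E]]].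
  have aE : a \in [set u; v] by rewrite -E set21.
  have bE : b \in [set u; v] by rewrite -E set22.
  move: aE bE; rewrite !inE => /orP[]/eqP ha /orP[]/eqP hb; subst a b.
  - have : v \in [set u; u] by rewrite E set22.
    by rewrite !inE orbb => /eqP vu; move: uv; rewrite vu (negbTE (adj_irr u)).
  - exact: adj_f.
  - by case: (adj_f uv) => ->; [right|left].
  - have : u \in [set v; v] by rewrite E set21.
    by rewrite !inE orbb => /eqP vu; move: uv; rewrite vu (negbTE (adj_irr v)).
have zS : z \in span_vertices F by rewrite (subsetP subS) // !inE eqxx.
have tS : t \in span_vertices F by rewrite (subsetP subS) // !inE eqxx orbT.
have Czt : connect R z t by move/forall_inP: FB => /(_ _ zS) /forall_inP /(_ _ tS).
have fz : fsum z = 0.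
  by rewrite /fsum big1 // => i _; rewrite ffunE.
have ft : fsum t = \sum_(i < k) n i - k.
  by rewrite -(sum_pred hk hn) /fsum; apply: eq_bigr => i _; rewrite ffunE.
pose D := \sum_(i < k) n i - k.
pose Q (j : nat) (E : {set V}) := [exists a, exists b, (E == [set a; b]) && (fsum a == j) && (fsum b == j.+1)].
pose g (j : 'I_D) : {set V} := odflt set0 [pick E in F | Q j E].
have gP : forall j : 'I_D, g j \in F /\ Q j (g j).
  move=> j; rewrite /g; case: pickP => [E /andP[EF QE] | none] //=.
  have [a [b [Rab fa fb]]] : exists a b, [/\ R a b, fsum a = j & fsum b = j.+1].
    apply: (cross HR Czt); rewrite fz ft; have := ltn_ord j; lia.
  by have := none [set a; b]; rewrite (Rab : [set a; b] \in F) /= /Q => /negbT/negP; case; apply/existsP; exists a;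
    apply/existsP; exists b; rewrite eqxx fa fb !eqxx.
have ginj : injective g.
  move=> j j' E; apply: val_inj => /=.
  have [_ /existsP[a /existsP[b /andP[/andP[/eqP Eab /eqP fa] /eqP fb]]]] := gP j.
  have [_ /existsP[a' /existsP[b' /andP[/andP[/eqP Eab' /eqP fa'] /eqP fb']]]] := gP j'.
  rewrite E Eab' in Eab.
  have : a \in [set a'; b'] by rewrite Eab set21.
  have : b \in [set a'; b'] by rewrite Eab set22.
  rewrite !inE => /orP[]/eqP hb /orP[]/eqP ha; subst; lia.
have le1 : D <= #|F|.
  rewrite -{1}(card_ord D) -(card_imset _ ginj); apply: subset_leq_card.
  by apply/subsetP=> E /imsetP[j _ ->]; case: (gP j).
have le2 : #|F| <= m.
  rewrite -(card_in_imset (f := c)); first by apply: leq_trans (max_card _) _; rewrite card_ord.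
  move=> E E' EF E'F ce; move/forall_inP: rainF => /(_ _ EF) /forall_inP /(_ _ E'F).
  by rewrite ce eqxx => /eqP.
exact: leq_trans le1 le2.
Qed.

End Lower.

Theorem corollary1 (k : nat) (n : 'I_k -> nat) :
  2 <= k -> (forall i, 3 <= n i) ->
  rx3_eq (@grid_adj k n) (\sum_(i < k) n i - k).
Proof.
move=> hk hn; split; first exact: upper.
by move=> m c; apply: lower.
Qed.
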